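(* Let $n\ge2$, let $a=(a_1,\dots,a_n)$ and $b=(b_1,\dots,b_n)$ be real sequences, and let $t=(t_1,\dots,t_n)\in T_a\cap T_b$. Let $p=(p_1,\dots,p_n)\in[0,\infty)^n$ with at least two $p_i$ positive (so that $S_{n,p}(t,t)>0$). Then $$S_{n,p}(a,b)\ge \frac{S_{n,p}(a,t)\,S_{n,p}(b,t)}{S_{n,p}(t,t)}.$$
   Context: For a real sequence $(x_i)$, $\Delta x_i=x_{i+1}-x_i$. ''Increasing'' means strictly increasing. For a real sequence $a=(a_i)_{i=1}^n$, $T_a$ denotes the set of increasing real sequences $(t_i)_{i=1}^n$ such that $(\Delta a_i/\Delta t_i)_{i=1}^{n-1}$ is non-decreasing. For $p\in[0,\infty)^n$ with $P_n=\sum_{i=1}^n p_i>0$ and $x,y\in\mathbb{R}^n$: $M_{n,p}(x)=\frac1{P_n}\sum_{i=1}^n p_ix_i$, $xy=(x_1y_1,\dots,x_ny_n)$, and $S_{n,p}(x,y)=M_{n,p}(xy)-M_{n,p}(x)M_{n,p}(y)$. *)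

(* Defs.v *)
From mathcomp Require Import all_boot all_order all_algebra.
Set Implicit Arguments. Unset Strict Implicit. Unset Printing Implicit Defensive.
Import Order.TTheory GRing.Theory Num.Theory.
Local Open Scope ring_scope.

(* Convention: a real sequence (x_1,...,x_n) is represented by a function
   x : nat -> R, using 0-based indices 0,...,n-1 (x_{i+1} in the paper is x i).
   Values outside 0..n-1 are irrelevant. *)

Definition Delta (R : pzRingType) (x : nat -> R) (i : nat) : R := x i.+1 - x i.

Definition increasing_seq (R : realFieldType) (n : nat) (t : nat -> R) : Prop :=
  forall i : nat, (i.+1 < n)%N -> t i < t i.+1.

Definition in_T (R : realFieldType) (n : nat) (a t : nat -> R) : Prop :=
  increasing_seq n t /\
  forall i : nat, (i.+2 < n)%N ->
    Delta a i / Delta t i <= Delta a i.+1 / Delta t i.+1.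

Definition Psum (R : realFieldType) (n : nat) (p : nat -> R) : R :=
  \sum_(i < n) p i.

Definition Mean (R : realFieldType) (n : nat) (p x : nat -> R) : R :=
  (Psum n p)^-1 * \sum_(i < n) p i * x i.

Definition Scov (R : realFieldType) (n : nat) (p x y : nat -> R) : R :=
  Mean n p (fun i => x i * y i) - Mean n p x * Mean n p y.

(* Main.v *)
Require Import Defs.
From mathcomp Require Import all_boot all_order all_algebra.
From mathcomp Require Import ring lra zify.
Import Order.TTheory GRing.Theory Num.Theory.
Set Implicit Arguments. Unset Strict Implicit. Unset Printing Implicit Defensive.
Local Open Scope ring_scope.

Definition Bf (R : realFieldType) (n : nat) (p x y : nat -> R) : R :=
  \sum_(i < n) \sum_(j < n) p i * p j * (x i * (y i - y j)).

Definition ind (R : realFieldType) (k i : nat) : R := ((k < i)%N)%:R.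

Lemma antisym_sum0 (R : realFieldType) (n : nat) (E : nat -> nat -> R) :
  (forall i j, E i j = - E j i) -> \sum_(i < n) \sum_(j < n) E i j = 0.
Proof.
move=> HE.
set X := \sum_(i < n) \sum_(j < n) E i j.
have HX : X = - X.
  rewrite {1}/X exchange_big /= /X -sumrN; apply: eq_bigr => i _.
  rewrite -sumrN; apply: eq_bigr => j _; exact: HE.
lra.
Qed.

Lemma Scov_Bf (R : realFieldType) (n : nat) (p x y : nat -> R) :
  Psum n p != 0 -> Scov n p x y = (Psum n p)^-1 ^+ 2 * Bf n p x y.
Proof.
move=> HP.
have -> : Bf n p x y = (\sum_(i < n) p i * (x i * y i)) * Psum n p
     - (\sum_(i < n) p i * x i) * (\sum_(i < n) p i * y i).
  rewrite /Bf mulr_suml mulr_suml -sumrB; apply: eq_bigr => i _.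
  rewrite /Psum mulr_sumr mulr_sumr -sumrB; apply: eq_bigr => j _; ring.
rewrite /Scov /Mean; field; exact: HP.
Qed.

Lemma Bf_ext (R : realFieldType) (n : nat) (p x x' y y' : nat -> R) :
  (forall i, (i < n)%N -> x i = x' i) -> (forall i, (i < n)%N -> y i = y' i) ->
  Bf n p x y = Bf n p x' y'.
Proof.
move=> Hx Hy; rewrite /Bf; apply: eq_bigr => i _; apply: eq_bigr => j _.
by rewrite !Hx ?Hy.
Qed.

Lemma Bf_lin1 (R : realFieldType) (n m : nat) (p y : nat -> R) (c : R)
   (al : nat -> R) (f : nat -> nat -> R) :
  Bf n p (fun i => c + \sum_(k < m) al k * f k i) y
  = \sum_(k < m) al k * Bf n p (f k) y.
Proof.
rewrite /Bf.
have -> : \sum_(i < n) \sum_(j < n) p i * p j * ((c + \sum_(k < m) al k * f k i) * (y i - y j))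
  = \sum_(i < n) \sum_(j < n) c * (p i * p j * (y i - y j))
  + \sum_(i < n) \sum_(j < n) \sum_(k < m) al k * (p i * p j * (f k i * (y i - y j))).
  rewrite -big_split /=; apply: eq_bigr => i _.
  rewrite -big_split /=; apply: eq_bigr => j _.
  rewrite mulrDl mulrDr; congr (_ + _); first ring.
  rewrite mulr_suml mulr_sumr; apply: eq_bigr => k _; ring.
rewrite (@antisym_sum0 _ n (fun i j => c * (p i * p j * (y i - y j)))) ?add0r; last by move=> i j; ring.
under eq_bigr do rewrite exchange_big /=.
rewrite exchange_big /=.
apply: eq_bigr => k _; rewrite mulr_sumr; apply: eq_bigr => i _.
by rewrite mulr_sumr.
Qed.

Lemma Bf_lin2 (R : realFieldType) (n m : nat) (p x : nat -> R) (c : R)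
   (al : nat -> R) (f : nat -> nat -> R) :
  Bf n p x (fun i => c + \sum_(k < m) al k * f k i)
  = \sum_(k < m) al k * Bf n p x (f k).
Proof.
rewrite /Bf.
have -> : \sum_(i < n) \sum_(j < n) p i * p j * (x i * ((c + \sum_(k < m) al k * f k i) - (c + \sum_(k < m) al k * f k j)))
  = \sum_(i < n) \sum_(j < n) \sum_(k < m) al k * (p i * p j * (x i * (f k i - f k j))).
  apply: eq_bigr => i _; apply: eq_bigr => j _.
  have -> : (c + \sum_(k < m) al k * f k i) - (c + \sum_(k < m) al k * f k j)
     = \sum_(k < m) al k * (f k i - f k j).
    suff -> : forall A B : R, (c + A) - (c + B) = A - B.
      by rewrite -sumrB; apply: eq_bigr => k _; ring.
    by move=> A B; ring.
  rewrite mulr_sumr mulr_sumr; apply: eq_bigr => k _; ring.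
under eq_bigr do rewrite exchange_big /=.
rewrite exchange_big /=.
apply: eq_bigr => k _; rewrite mulr_sumr; apply: eq_bigr => i _.
by rewrite mulr_sumr.
Qed.

Lemma repr_seq (R : realFieldType) (n : nat) (x : nat -> R) (i : nat) :
  (i < n)%N -> x i = x 0%N + \sum_(k < n.-1) Delta x k * ind R k i.
Proof.
move=> Hi.
rewrite -(big_mkord xpredT (fun k => Delta x k * ind R k i)).
rewrite (big_cat_nat _ (n:=i)) //=; last by lia.
rewrite [X in _ + (_ + X)]big1_seq ?addr0; last first.
  move=> k /andP [_]; rewrite mem_index_iota => /andP [Hk _].
  rewrite /ind; have -> : (k < i)%N = false by lia.
  by rewrite mulr0.
rewrite (eq_big_seq (fun k => x k.+1 - x k)); last first.
  move=> k; rewrite mem_index_iota => /andP [_ Hk].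
  by rewrite /ind Hk mulr1.
rewrite telescope_sumr //; ring.
Qed.

Lemma Scov_expand (R : realFieldType) (n : nat) (p x y : nat -> R) :
  Psum n p != 0 ->
  Scov n p x y = \sum_(k < n.-1) \sum_(l < n.-1)
     Delta x k * Delta y l * Scov n p (ind R k) (ind R l).
Proof.
move=> HP; rewrite Scov_Bf //.
rewrite (@Bf_ext _ n p x (fun i => x 0%N + \sum_(k < n.-1) Delta x k * ind R k i)
                       y (fun i => y 0%N + \sum_(k < n.-1) Delta y k * ind R k i));
  try by move=> i Hi; apply: repr_seq.
rewrite Bf_lin1 mulr_sumr; apply: eq_bigr => k _.
rewrite Bf_lin2 !mulr_sumr; apply: eq_bigr => l _.
rewrite Scov_Bf //; ring.
Qed.

Lemma fminmax (R : realFieldType) (f : nat -> R) (a b : nat) :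
  f a * f b = f (minn a b) * f (maxn a b).
Proof.
by case: (leqP a b) => H //; rewrite mulrC.
Qed.

Lemma tp2 (R : realFieldType) (f g : nat -> R) :
  (forall a b, (a <= b)%N -> f a <= f b) -> (forall a, 0 <= f a) ->
  (forall a b, (a <= b)%N -> g b <= g a) -> (forall a, 0 <= g a) ->
  forall k k' l l', (k <= k')%N -> (l <= l')%N ->
  f (minn k' l) * g (maxn k' l) * (f (minn k l') * g (maxn k l'))
  <= f (minn k l) * g (maxn k l) * (f (minn k' l') * g (maxn k' l')).
Proof.
move=> fm f0 gm g0 k k' l l' Hk Hl.
have Hf : f (minn k' l) * f (minn k l') <= f (minn k l) * f (minn k' l').
  rewrite fminmax.
  have -> : minn k l = minn (minn k' l) (minn k l') by lia.
  apply: ler_wpM2l; first exact: f0.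
  apply: fm; lia.
have Hg : g (maxn k' l) * g (maxn k l') <= g (maxn k l) * g (maxn k' l').
  rewrite fminmax.
  have -> : maxn k' l' = maxn (maxn k' l) (maxn k l') by lia.
  apply: ler_wpM2r; first exact: g0.
  apply: gm; lia.
have := ler_pM (mulr_ge0 (f0 _) (f0 _)) (mulr_ge0 (g0 _) (g0 _)) Hf Hg.
by rewrite mulrACA [X in _ <= X -> _]mulrACA [X in _ <= X]mulrACA mulrACA.
Qed.

Lemma sym_nonneg (R : realFieldType) (m : nat) (u : nat -> R) (E : nat -> nat -> R) :
  (forall k k' : nat, (k < m)%N -> (k' < m)%N -> 0 <= (u k - u k') * E k k') ->
  (forall k k', E k' k = - E k k') ->
  0 <= \sum_(k < m) \sum_(k' < m) u k * E k k'.
Proof.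
move=> Hpos HE.
set X := \sum_(k < m) \sum_(k' < m) u k * E k k'.
have HX : X + X = \sum_(k < m) \sum_(k' < m) (u k - u k') * E k k'.
  rewrite {2}/X exchange_big /= /X -big_split; apply: eq_bigr => k _.
  rewrite -big_split; apply: eq_bigr => k' _ /=; rewrite HE; ring.
have : 0 <= X + X.
  rewrite HX; apply: sumr_ge0 => k _; apply: sumr_ge0 => k' _; exact: Hpos.
lra.
Qed.

Lemma key_id (R : realFieldType) (m : nat) (s v W : nat -> R) :
  \sum_(l < m) \sum_(l' < m) s l * (v l * W l' - v l' * W l)
   = (\sum_(l < m) s l * v l) * (\sum_(l < m) W l) - (\sum_(l < m) s l * W l) * (\sum_(l < m) v l).
Proof.
rewrite mulr_suml mulr_suml -sumrB; apply: eq_bigr => l _.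
rewrite !mulr_sumr -sumrB; apply: eq_bigr => l' _; ring.
Qed.

Lemma cheb (R : realFieldType) (m : nat) (w : nat -> nat -> R) (r s : nat -> R) :
  (forall k k' l l', (k <= k')%N -> (l <= l')%N -> (k' < m)%N -> (l' < m)%N ->
      w k' l * w k l' <= w k l * w k' l') ->
  (forall a b, (a <= b)%N -> (b < m)%N -> r a <= r b) ->
  (forall a b, (a <= b)%N -> (b < m)%N -> s a <= s b) ->
  (\sum_(l < m) \sum_(k < m) r k * w k l) * (\sum_(l < m) \sum_(k < m) s l * w k l)
  <= (\sum_(l < m) \sum_(k < m) w k l) * (\sum_(l < m) \sum_(k < m) r k * s l * w k l).
Proof.
move=> tp rm sm.
pose v l := \sum_(k < m) r k * w k l.
pose W l := \sum_(k < m) w k l.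
have c1 : forall l l', (l <= l')%N -> (l' < m)%N -> v l * W l' <= v l' * W l.
  move=> l l' Hl Hl'.
  have H : 0 <= \sum_(k < m) \sum_(k' < m)
       r k * (w k l' * w k' l - w k l * w k' l').
    apply: (@sym_nonneg _ m r (fun k k' => w k l' * w k' l - w k l * w k' l')); last by move=> k k'; ring.
    move=> k k' Hk Hk'; case: (leqP k k') => Hkk.
      have := tp k k' l l' Hkk Hl Hk' Hl'; have := rm k k' Hkk Hk'; nra.
    have := tp k' k l l' (ltnW Hkk) Hl Hk Hl'; have := rm k' k (ltnW Hkk) Hk; nra.
  suff : v l * W l' - v l' * W l = - \sum_(k < m) \sum_(k' < m)
       r k * (w k l' * w k' l - w k l * w k' l') by lra.
  rewrite /v /W !mulr_suml -sumrB -sumrN; apply: eq_bigr => k _.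
  rewrite !mulr_sumr -sumrB -sumrN; apply: eq_bigr => k' _; ring.
have c2 : 0 <= \sum_(l < m) \sum_(l' < m) s l * (v l * W l' - v l' * W l).
  apply: (@sym_nonneg _ m s (fun l l' => v l * W l' - v l' * W l)); last by move=> k k'; ring.
  move=> k k' Hk Hk'; case: (leqP k k') => Hkk.
    have := c1 k k' Hkk Hk'; have := sm k k' Hkk Hk'; nra.
  have := c1 k' k (ltnW Hkk) Hk; have := sm k' k (ltnW Hkk) Hk; nra.
have key : \sum_(l < m) \sum_(l' < m) s l * (v l * W l' - v l' * W l)
   = (\sum_(l < m) s l * v l) * (\sum_(l < m) W l) - (\sum_(l < m) s l * W l) * (\sum_(l < m) v l).
  exact: key_id.
have e1 : \sum_(l < m) s l * v l = \sum_(l < m) \sum_(k < m) r k * s l * w k l.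
  apply: eq_bigr => l _; rewrite /v mulr_sumr; apply: eq_bigr => k _; ring.
have e2 : \sum_(l < m) s l * W l = \sum_(l < m) \sum_(k < m) s l * w k l.
  by apply: eq_bigr => l _; rewrite /W mulr_sumr.
rewrite key e1 e2 /v /W in c2; lra.
Qed.

Lemma sum_ge_term (R : realFieldType) (m : nat) (F : nat -> R) (i : nat) :
  (forall k, (k < m)%N -> 0 <= F k) -> (i < m)%N -> F i <= \sum_(k < m) F k.
Proof.
move=> H0 Hi.
rewrite (bigD1 (Ordinal Hi)) //= lerDl; apply: sumr_ge0 => k _; exact: H0.
Qed.

Lemma mono_ext (R : realFieldType) (u : nat -> R) (m : nat) :
  (forall i, (i.+1 < m)%N -> u i <= u i.+1) ->
  forall a b, (a <= b)%N -> (b < m)%N -> u a <= u b.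
Proof.
move=> H a b; elim: b => [|b IH] Hab Hb.
  by have -> : a = 0%N by lia.
case: (leqP a b) => Hab'.
  exact: le_trans (IH Hab' (ltnW Hb)) (H b Hb).
by have -> : a = b.+1 by lia.
Qed.

Lemma Scov_sym (R : realFieldType) (n : nat) (p x y : nat -> R) :
  Scov n p x y = Scov n p y x.
Proof.
rewrite /Scov [Mean n p x * _]mulrC.
have -> : Mean n p (fun i => x i * y i) = Mean n p (fun i => y i * x i).
  by rewrite /Mean; congr (_ * _); apply: eq_bigr => i _; rewrite [x i * _]mulrC.
by [].
Qed.

Lemma F_props (R : realFieldType) (n : nat) (p : nat -> R) :
  0 < Psum n p -> (forall i, (i < n)%N -> 0 <= p i) ->
  [/\ forall k, 0 <= Mean n p (ind R k),
      forall k, Mean n p (ind R k) <= 1 &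
      forall k k', (k <= k')%N -> Mean n p (ind R k') <= Mean n p (ind R k)].
Proof.
move=> HP p0; have HPi : 0 <= (Psum n p)^-1 by rewrite invr_ge0 ltW.
have ind01 : forall k i, 0 <= ind R k i <= 1.
  by move=> k i; rewrite /ind; case: (k < i)%N => /=; rewrite ?lexx ?ler01.
split.
- move=> k; rewrite /Mean; apply: mulr_ge0 => //; apply: sumr_ge0 => i _.
  apply: mulr_ge0; [exact: p0 | by case/andP: (ind01 k i)].
- move=> k; rewrite /Mean -(mulVf (lt0r_neq0 HP)); apply: ler_wpM2l => //.
  rewrite /Psum; apply: ler_sum => i _.
  have := p0 i (ltn_ord i); have := ind01 k i; move=> /andP [h1 h2] h3; nra.
- move=> k k' Hk; rewrite /Mean; apply: ler_wpM2l => //; apply: ler_sum => i _.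
  apply: ler_wpM2l; first exact: p0.
  rewrite /ind ler_nat; case: (boolP (k' < i)%N) => H //=.
  by rewrite (leq_ltn_trans Hk H).
Qed.

Lemma G_formula (R : realFieldType) (n : nat) (p : nat -> R) (k l : nat) :
  Scov n p (ind R k) (ind R l)
  = (1 - Mean n p (ind R (minn k l))) * Mean n p (ind R (maxn k l)).
Proof.
rewrite /Scov.
have -> : Mean n p (fun i => ind R k i * ind R l i) = Mean n p (ind R (maxn k l)).
  rewrite /Mean; congr (_ * _); apply: eq_bigr => i _.
  by rewrite /ind -natrM mulnb gtn_max.
rewrite (fminmax (fun k => Mean n p (ind R k))) /=; ring.
Qed.

Theorem theorem4p1 (R : realFieldType) (n : nat) (a b t p : nat -> R) :
  (2 <= n)%N ->
  in_T n a t -> in_T n b t ->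
  (forall i : nat, (i < n)%N -> 0 <= p i) ->
  (exists i j : nat, [/\ (i < n)%N, (j < n)%N, i <> j, 0 < p i & 0 < p j]) ->
  Scov n p a b >= Scov n p a t * Scov n p b t / Scov n p t t.
Proof.
move=> H2 [tinc Ha] [_ Hb] p0 [i1 [j1 [Hi1 Hj1 Hij1 pi1 pj1]]].
have [i0 [j0 [Hij Hj pi pj]]] : exists i0 j0, [/\ (i0 < j0)%N, (j0 < n)%N, 0 < p i0 & 0 < p j0].
  case: (ltngtP i1 j1) => H.
  - by exists i1, j1.
  - by exists j1, i1.
  - by exfalso; apply: Hij1.
have HP : 0 < Psum n p.
  apply: lt_le_trans pi _; apply: (@sum_ge_term _ n p i0) => //; lia.
have HP0 : Psum n p != 0 by rewrite gt_eqF.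
have [F0 F1 Fm] := F_props HP p0.
set m := n.-1.
have dpos : forall k, (k < m)%N -> 0 < Delta t k.
  move=> k Hk; rewrite /Delta subr_gt0; apply: tinc; lia.
pose F k := Mean n p (ind R k).
pose G k l := Scov n p (ind R k) (ind R l).
have G0 : forall k l, 0 <= G k l.
  move=> k l; rewrite /G G_formula; apply: mulr_ge0; last exact: F0.
  by rewrite subr_ge0.
pose w k l := Delta t k * Delta t l * G k l.
pose r k := Delta a k / Delta t k.
pose s k := Delta b k / Delta t k.
have eab : Scov n p a b = \sum_(l < m) \sum_(k < m) r k * s l * w k l.
  rewrite (Scov_expand a b HP0) exchange_big; apply: eq_bigr => l _.
  apply: eq_bigr => k _; rewrite /r /s /w /G.
  have := dpos _ (ltn_ord k); have := dpos _ (ltn_ord l).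
  move=> /lt0r_neq0 hl /lt0r_neq0 hk; field; by rewrite hk hl.
have eat : Scov n p a t = \sum_(l < m) \sum_(k < m) r k * w k l.
  rewrite (Scov_expand a t HP0) exchange_big; apply: eq_bigr => l _.
  apply: eq_bigr => k _; rewrite /r /w /G.
  have := dpos _ (ltn_ord k); move=> /lt0r_neq0 hk; field; by rewrite hk.
have ebt : Scov n p b t = \sum_(l < m) \sum_(k < m) s l * w k l.
  rewrite Scov_sym (Scov_expand t b HP0) exchange_big; apply: eq_bigr => l _.
  apply: eq_bigr => k _; rewrite /s /w /G.
  have := dpos _ (ltn_ord l); move=> /lt0r_neq0 hl; field; by rewrite hl.
have ett : Scov n p t t = \sum_(l < m) \sum_(k < m) w k l.
  rewrite (Scov_expand t t HP0) exchange_big; apply: eq_bigr => l _.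
  by apply: eq_bigr => k _.
have Hi0 : (i0 < m)%N by lia.
have Stpos : 0 < Scov n p t t.
  have w0 : forall k l, (k < m)%N -> (l < m)%N -> 0 <= w k l.
    move=> k l Hk Hl; rewrite /w; apply: mulr_ge0; last exact: G0.
    by apply: mulr_ge0; apply: ltW; apply: dpos.
  have wpos : 0 < w i0 i0.
    rewrite /w; apply: mulr_gt0; first by apply: mulr_gt0; apply: dpos.
    rewrite /G G_formula minnn maxnn.
    have Fpos : 0 < F i0.
      rewrite /F /Mean; apply: mulr_gt0; first by rewrite invr_gt0.
      apply: lt_le_trans pj _.
      have -> : p j0 = p j0 * ind R i0 j0 by rewrite /ind Hij mulr1.
      apply: (@sum_ge_term _ n (fun i => p i * ind R i0 i) j0) => // k Hk.
      apply: mulr_ge0; first exact: p0.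
      by rewrite /ind ler0n.
    have Flt : F i0 < 1.
      rewrite /F /Mean -(mulVf HP0) ltr_pM2l ?invr_gt0 //.
      rewrite -subr_gt0 /Psum -sumrB.
      apply: lt_le_trans pi _.
      have -> : p i0 = p i0 - p i0 * ind R i0 i0 by rewrite /ind ltnn mulr0 subr0.
      apply: (@sum_ge_term _ n (fun i => p i - p i * ind R i0 i) i0); last by lia.
      move=> k Hk; have := p0 k Hk; rewrite /ind.
      case: (i0 < k)%N => /= h; rewrite ?mulr1 ?mulr0; lra.
    apply: mulr_gt0 => //; by rewrite subr_gt0.
  rewrite ett; apply: lt_le_trans wpos _.
  apply: le_trans (_ : \sum_(k < m) w k i0 <= _).
    apply: (@sum_ge_term _ m (fun k => w k i0) i0) => // k Hk; exact: w0.
  apply: (@sum_ge_term _ m (fun l => \sum_(k < m) w k l) i0) => // l Hl.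
  apply: sumr_ge0 => k _; apply: w0 => //; exact: ltn_ord.
rewrite ler_pdivrMr // eab eat ebt ett [X in _ <= X]mulrC.
apply: cheb.
- move=> k k' l l' Hk Hl Hk' Hl'.
  have := @tp2 _ (fun k => 1 - F k) F
    (fun x y Hxy => lerB (lexx 1) (Fm x y Hxy)) (fun x => (ltac:(rewrite subr_ge0; exact: F1)))
    Fm F0 k k' l l' Hk Hl.
  rewrite /w /G !G_formula -/F => H.
  have d1 := dpos k (leq_ltn_trans Hk Hk'); have d2 := dpos k' Hk'.
  have d3 := dpos l (leq_ltn_trans Hl Hl'); have d4 := dpos l' Hl'.
  set A := (1 - F (minn k' l)) * F (maxn k' l) in H *.
  set B := (1 - F (minn k l')) * F (maxn k l') in H *.
  set C := (1 - F (minn k l)) * F (maxn k l) in H *.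
  set D := (1 - F (minn k' l')) * F (maxn k' l') in H *.
  have -> : Delta t k' * Delta t l * A * (Delta t k * Delta t l' * B)
     = (Delta t k * Delta t k' * Delta t l * Delta t l') * (A * B) by ring.
  have -> : Delta t k * Delta t l * C * (Delta t k' * Delta t l' * D)
     = (Delta t k * Delta t k' * Delta t l * Delta t l') * (C * D) by ring.
  apply: ler_wpM2l => //.
  by repeat apply: mulr_ge0; apply: ltW.
- apply: mono_ext => i Hi; apply: Ha; lia.
- apply: mono_ext => i Hi; apply: Hb; lia.
Qed.
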